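(* Let $W$ be the affine Weyl group of an irreducible reduced crystallographic root system of rank 2, with simple generators $s_0,s_1,s_2$. Let $H_{r_0},H_{r_1}$ be adjacent parallel hyperplanes ($H_{\alpha,c}$ and $H_{\alpha,c+1}$ for some root $\alpha$, $c\in\mathbb{Z}$) and suppose both the alcove $w\in W$ and the identity alcove lie in the strip between them. If $D_R(w)=\{0,i\}$ with $i\in\{1,2\}$, then $s_0s_i$ does not have order $4$.
   Context: $W$ is generated by the reflections in the lines $H_{\beta,k}=\{v:\langle v,\beta\rangle=k\}$ ($\beta$ a root, $k\in\mathbb{Z}$) in a Euclidean plane; its simple generators $s_0,s_1,s_2$ are the reflections in the walls of the fundamental alcove $A_0$, $s_0$ being the reflection in the wall not through the origin. Elements are identified with alcoves via $w\mapsto wA_0$. $\ell$ is Coxeter length; $D_R(w)=\{j:\ell(ws_j)<\ell(w)\}$. *)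

(* Defs.v *)
From mathcomp Require Import all_boot all_order all_algebra.
Set Implicit Arguments. Unset Strict Implicit. Unset Printing Implicit Defensive.
Import Order.TTheory GRing.Theory Num.Theory.
Local Open Scope ring_scope.

Inductive rtype := A2 | B2 | G2.

Section AffineWeyl.
Context {R : realFieldType}.

(* The Euclidean plane is 'rV[R]_2, written in coordinates w.r.t. the basis of
   simple root_sys alpha1, alpha2; the inner product is given by a Gram matrix. *)
Definition mkv (a b : R) : 'rV[R]_2 :=
  \row_(j < 2) if val j == 0%N then a else b.

Definition m2 (x y z u : R) : 'M[R]_2 :=
  \matrix_(a < 2, b < 2)
    if val a == 0%N then (if val b == 0%N then x else y)
    else (if val b == 0%N then z else u).

Definition gram (t : rtype) : 'M[R]_2 :=
  match t with
  | A2 => m2 2 (-1) (-1) 2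
  | B2 => m2 1 (-1) (-1) 2      (* alpha1 short, alpha2 long *)
  | G2 => m2 2 (-3) (-3) 6      (* alpha1 short, alpha2 long *)
  end.

Definition ip (t : rtype) (u v : 'rV[R]_2) : R := (u *m gram t *m v^T) 0 0.

Definition alpha1 : 'rV[R]_2 := mkv 1 0.
Definition alpha2 : 'rV[R]_2 := mkv 0 1.

Definition pos_roots (t : rtype) : seq 'rV[R]_2 :=
  match t with
  | A2 => [:: mkv 1 0; mkv 0 1; mkv 1 1]
  | B2 => [:: mkv 1 0; mkv 0 1; mkv 1 1; mkv 2 1]
  | G2 => [:: mkv 1 0; mkv 0 1; mkv 1 1; mkv 2 1; mkv 3 1; mkv 3 2]
  end.

Definition root_sys (t : rtype) : seq 'rV[R]_2 :=
  pos_roots t ++ map (fun b => - b) (pos_roots t).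

Definition highest (t : rtype) : 'rV[R]_2 :=
  match t with A2 => mkv 1 1 | B2 => mkv 2 1 | G2 => mkv 3 2 end.

Definition in_A0 (t : rtype) (v : 'rV[R]_2) : Prop :=
  forall beta, beta \in pos_roots t -> 0 < ip t v beta < 1.

(* affine maps v |-> v *m f.1 + f.2 (an eqType, so equality is decidable) *)
Definition aff := ('M[R]_2 * 'rV[R]_2)%type.
Definition aff_app (f : aff) (v : 'rV[R]_2) : 'rV[R]_2 := v *m f.1 + f.2.
(* comp f g = f o g *)
Definition comp (f g : aff) : aff := (g.1 *m f.1, g.2 *m f.1 + f.2).
Definition aff_id : aff := (1%:M, 0).

(* reflection in H_{beta,k} = {v | <v,beta> = k}:
   v |-> v - (<v,beta> - k) beta^vee, beta^vee = 2 beta / <beta,beta> *)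
Definition refl (t : rtype) (beta : 'rV[R]_2) (k : R) : aff :=
  let bv := (2 / ip t beta beta) *: beta in
  (1%:M - (gram t *m beta^T) *m bv, k *: bv).

(* simple generators: s0 = reflection in the wall H_{theta,1} of A0 not
   through the origin, s1, s2 = reflections in H_{alpha1,0}, H_{alpha2,0} *)
Definition gen (t : rtype) (j : 'I_3) : aff :=
  if val j == 0%N then refl t (highest t) 1
  else if val j == 1%N then refl t alpha1 0
  else refl t alpha2 0.

Definition evalw (t : rtype) (s : seq 'I_3) : aff :=
  foldr (fun j acc => comp (gen t j) acc) aff_id s.

Lemma evalw_exists (t : rtype) (s : seq 'I_3) :
  exists n, [exists u : n.-tuple 'I_3, evalw t u == evalw t s].
Proof. by exists (size s); apply/existsP; exists (in_tuple s). Qed.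

Definition coxlen (t : rtype) (s : seq 'I_3) : nat := ex_minn (evalw_exists t s).

Definition DR (t : rtype) (s : seq 'I_3) : {set 'I_3} :=
  [set j | (coxlen t (rcons s j) < coxlen t s)%N].

Definition aff_pow (g : aff) (n : nat) : aff := iter n (comp g) aff_id.

Definition has_order (g : aff) (n : nat) : Prop :=
  (0 < n)%N /\ aff_pow g n = aff_id /\
  forall m, (0 < m)%N -> (m < n)%N -> aff_pow g m <> aff_id.

End AffineWeyl.

(* Main.v *)
Require Import Defs.
From Stdlib Require Import ZArith Lia List.
From mathcomp Require Import all_boot all_order all_algebra.
From mathcomp Require Import ssrZ zify.
Import Order.TTheory GRing.Theory Num.Theory.

Section ZModel.
Local Open Scope Z_scope.
Definition zm := (Z*Z*Z*Z)%type.
Definition zv := (Z*Z)%type.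
Definition zaff := (zm*zv)%type.
Definition vmZ (v : zv) (M : zm) : zv :=
  let '(a,b) := v in let '(x,y,z,u) := M in (a*x+b*z, a*y+b*u).
Definition mmZ (A B : zm) : zm :=
  let '(a,b,c,d) := A in let '(x,y,z,u) := B in
  (a*x+b*z, a*y+b*u, c*x+d*z, c*y+d*u).
Definition vaddZ (v w : zv) : zv := (fst v + fst w, snd v + snd w).
Definition zcomp (f g : zaff) : zaff := (mmZ (fst g) (fst f), vaddZ (vmZ (snd g) (fst f)) (snd f)).
Definition zid : zaff := ((1,0,0,1),(0,0)).
Definition zgenB (j : nat) : zaff :=
  match j with
  | 0%nat => ((-1,-1,0,1),(2,1))
  | 1%nat => ((-1,0,2,1),(0,0))
  | _ => ((1,1,0,-1),(0,0))
  end.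
Definition W0 : list zm :=
 (1,0,0,1)::(-1,-1,0,1)::(-1,0,2,1)::(1,1,0,-1)::(1,1,-2,-1)::(-1,0,0,-1)::(-1,-1,2,1)::(1,0,-2,-1)::nil.
Definition zipB (u v : zv) : Z :=
  let '(a,b) := u in let '(c,d) := v in a*c - a*d - b*c + 2*b*d.
Definition qB : zv := (8,5).
Definition posB : list zv := (1,0)::(0,1)::(1,1)::(2,1)::nil.
Definition flB (f : zaff) (be : zv) : Z :=
  zipB (snd f) be + (if 0 <? zipB (vmZ qB (fst f)) be then 0 else -1).
Definition NB (f : zaff) : Z :=
  Z.abs (flB f (1,0)) + Z.abs (flB f (0,1)) + Z.abs (flB f (1,1)) + Z.abs (flB f (2,1)).
Definition inW (f : zaff) : Prop := In (fst f) W0 /\ (fst (snd f)) mod 2 = 0.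

Ltac zred :=
  cbv beta iota delta [NB flB zcomp mmZ vmZ vaddZ zipB qB zgenB fst snd];
  repeat match goal with |- context[(0 <? ?x)] =>
    let v := eval vm_compute in (0 <? x) in change (0 <? x) with v end;
  cbv iota.
Ltac zred_in H :=
  cbv beta iota delta [NB flB zcomp mmZ vmZ vaddZ zipB qB zgenB fst snd] in H;
  repeat match type of H with context[(0 <? ?x)] =>
    let v := eval vm_compute in (0 <? x) in change (0 <? x) with v in H end;
  cbv iota in H.

Lemma step_le M b0 b1 j : In M W0 -> (j < 3)%nat ->
  NB (zcomp (M,(b0,b1)) (zgenB j)) <= NB (M,(b0,b1)) + 1.
Proof.
intros H Hj. destruct j as [|[|[|j]]]; [| | | lia];
simpl in H; repeat destruct H as [<-|H]; try contradiction; zred; lia.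
Qed.

Lemma descent M k b1 : In M W0 -> 0 < NB (M,(2*k,b1)) ->
  NB (zcomp (M,(2*k,b1)) (zgenB 0)) < NB (M,(2*k,b1)) \/
  NB (zcomp (M,(2*k,b1)) (zgenB 1)) < NB (M,(2*k,b1)) \/
  NB (zcomp (M,(2*k,b1)) (zgenB 2)) < NB (M,(2*k,b1)).
Proof.
intros H.
simpl in H; repeat destruct H as [<-|H]; try contradiction; zred; lia.
Qed.


Lemma zero M k b1 : In M W0 -> NB (M,(2*k,b1)) = 0 -> (M,(2*k,b1)) = zid.
Proof.
intros H.
simpl in H; repeat destruct H as [<-|H]; try contradiction; zred; intros; unfold zid;
 first [exfalso; lia | repeat f_equal; lia].
Qed.
Definition rootsB : list zv := (1,0)::(0,1)::(1,1)::(2,1)::(-1,0)::(0,-1)::(-1,-1)::(-2,-1)::nil.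

Lemma inW_step M k b1 j : In M W0 -> (j < 3)%nat ->
  In (fst (zcomp (M,(2*k,b1)) (zgenB j))) W0 /\
  exists k', fst (snd (zcomp (M,(2*k,b1)) (zgenB j))) = 2*k'.
Proof.
intros H Hj. destruct j as [|[|[|j]]]; [| | | lia];
simpl in H; repeat destruct H as [<-|H]; try contradiction; zred;
(split; [simpl; tauto | 
  match goal with |- exists k', ?c + 2*k = 2*k' =>
    let h := eval vm_compute in (Z.div c 2) in exists (k + h); lia end]).
Qed.

Lemma final M k b1 c a : In M W0 -> In a rootsB ->
  NB (zcomp (M,(2*k,b1)) (zgenB 0)) < NB (M,(2*k,b1)) ->
  NB (zcomp (M,(2*k,b1)) (zgenB 1)) < NB (M,(2*k,b1)) ->
  10*c < zipB qB a < 10*c+10 ->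
  10*c < zipB (vmZ qB M) a + 10 * zipB (2*k,b1) a < 10*c+10 -> False.
Proof.
intros H Ha. 
simpl in H; repeat destruct H as [<-|H]; try contradiction;
simpl in Ha; repeat destruct Ha as [<-|Ha]; try contradiction; zred; lia.
Qed.


Lemma step_le' f j : In (fst f) W0 -> (j < 3)%nat -> NB (zcomp f (zgenB j)) <= NB f + 1.
Proof. destruct f as [M [b0 b1]]; cbn [fst]; intros H Hj; apply: (step_le _ _ _ _ H Hj). Qed.
Lemma descent' f k : In (fst f) W0 -> fst (snd f) = 2*k -> 0 < NB f ->
  NB (zcomp f (zgenB 0)) < NB f \/ NB (zcomp f (zgenB 1)) < NB f \/ NB (zcomp f (zgenB 2)) < NB f.
Proof. destruct f as [M [b0 b1]]; cbn [fst snd]; intros H ->; exact: descent. Qed.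
Lemma zero' f k : In (fst f) W0 -> fst (snd f) = 2*k -> NB f = 0 -> f = zid.
Proof. destruct f as [M [b0 b1]]; cbn [fst snd]; intros H ->; exact: zero. Qed.
Lemma inW_step' f k j : In (fst f) W0 -> fst (snd f) = 2*k -> (j < 3)%nat ->
  In (fst (zcomp f (zgenB j))) W0 /\ exists k', fst (snd (zcomp f (zgenB j))) = 2*k'.
Proof. destruct f as [M [b0 b1]]; cbn [fst snd]; intros H ->; exact: inW_step. Qed.
Lemma final' f k c a : In (fst f) W0 -> fst (snd f) = 2*k -> In a rootsB ->
  NB (zcomp f (zgenB 0)) < NB f ->
  NB (zcomp f (zgenB 1)) < NB f ->
  10*c < zipB qB a < 10*c+10 ->
  10*c < zipB (vmZ qB (fst f)) a + 10 * zipB (snd f) a < 10*c+10 -> False.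
Proof. destruct f as [M [b0 b1]]; cbn [fst snd]; intros H ->; exact: final. Qed.

Definition zgen (t : rtype) (j : nat) : zaff :=
  match t with
  | A2 => match j with 0%nat => ((0,-1,-1,0),(1,1)) | 1%nat => ((-1,0,1,1),(0,0)) | _ => ((1,1,0,-1),(0,0)) end
  | B2 => zgenB j
  | G2 => match j with 0%nat => ((1,0,-3,-1),(3,2)) | 1%nat => ((-1,0,3,1),(0,0)) | _ => ((1,1,0,-1),(0,0)) end
  end.
Definition zevalw (t : rtype) (s : list 'I_3) : zaff :=
  foldr (fun j acc => zcomp (zgen t (nat_of_ord j)) acc) zid s.
Definition zpow (g : zaff) (n : nat) : zaff := ssrnat.iter n (zcomp g) zid.

Lemma zcompA f g h : zcomp f (zcomp g h) = zcomp (zcomp f g) h.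
Proof.
destruct f as [[[[a b] c] d] [x y]]; destruct g as [[[[a' b'] c'] d'] [x' y']];
destruct h as [[[[a'' b''] c''] d''] [x'' y'']]; cbv beta iota delta [zcomp mmZ vmZ vaddZ fst snd].
repeat match goal with |- (_,_) = (_,_) => f_equal end; ring.
Qed.
Lemma zcomp_idr f : zcomp f zid = f.
Proof.
destruct f as [[[[a b] c] d] [x y]]; cbv beta iota delta [zcomp zid mmZ vmZ vaddZ fst snd].
repeat match goal with |- (_,_) = (_,_) => f_equal end; ring.
Qed.
Lemma zcomp_idl f : zcomp zid f = f.
Proof.
destruct f as [[[[a b] c] d] [x y]]; cbv beta iota delta [zcomp zid mmZ vmZ vaddZ fst snd].
repeat match goal with |- (_,_) = (_,_) => f_equal end; ring.
Qed.
Lemma zevalw_rcons t s j : zevalw t (rcons s j) = zcomp (zevalw t s) (zgen t j).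
Proof.
induction s as [|a s IH]; simpl.
- by rewrite zcomp_idl zcomp_idr.
- by rewrite IH zcompA.
Qed.

Lemma inW_all s : In (fst (zevalw B2 s)) W0 /\ exists k, fst (snd (zevalw B2 s)) = 2*k.
Proof.
elim/last_ind: s => [|s j [IH1 [k IH2]]].
- split; [simpl; tauto | exists 0; reflexivity].
- rewrite zevalw_rcons; exact: (inW_step' _ _ _ IH1 IH2 (ltn_ord j)).
Qed.

Lemma NB_nonneg f : 0 <= NB f.
Proof. unfold NB; lia. Qed.

Lemma N_le_size s : NB (zevalw B2 s) <= Z.of_nat (size s).
Proof.
elim/last_ind: s => [|s j IH].
- reflexivity.
- rewrite zevalw_rcons size_rcons.
  have [H1 [k H2]] := inW_all s.
  have := step_le' _ _ H1 (ltn_ord j). change (zgen B2) with zgenB. lia.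
Qed.

Lemma gen_invol (j : 'I_3) : zcomp (zgenB j) (zgenB j) = zid.
Proof. by case: j => [[|[|[|j]]] Hj]. Qed.

Lemma exists_word n s : (Z.to_nat (NB (zevalw B2 s)) <= n)%nat ->
  exists u : list 'I_3, zevalw B2 u = zevalw B2 s /\ Z.of_nat (size u) <= NB (zevalw B2 s).
Proof.
elim: n s => [|n IH] s Hn.
- exists [::]; split; last by simpl; have := NB_nonneg (zevalw B2 s); lia.
  have [H1 [k H2]] := inW_all s.
  symmetry; apply: (zero' _ _ H1 H2). have := NB_nonneg (zevalw B2 s); lia.
- have [H1 [k H2]] := inW_all s.
  have Hne := NB_nonneg (zevalw B2 s).
  have [H0|Hpos] : NB (zevalw B2 s) = 0 \/ 0 < NB (zevalw B2 s) by lia.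
  + exists [::]; split; last by simpl; lia.
    symmetry; exact: (zero' _ _ H1 H2).
  + have [j Hj] : exists j : 'I_3, NB (zcomp (zevalw B2 s) (zgenB j)) < NB (zevalw B2 s).
      case: (descent' _ _ H1 H2 Hpos) => [H|[H|H]].
      * by exists (@Ordinal 3 0 isT).
      * by exists (@Ordinal 3 1 isT).
      * by exists (@Ordinal 3 2 isT).
    have := IH (rcons s j).
    rewrite zevalw_rcons; change (zgen B2) with zgenB.
    case. have := NB_nonneg (zcomp (zevalw B2 s) (zgenB j)); lia.
    move=> u [Hu1 Hu2].
    exists (rcons u j); split.
    * by rewrite zevalw_rcons Hu1 /= -zcompA gen_invol zcomp_idr.
    * rewrite size_rcons. lia.
Qed.
End ZModel.

From mathcomp Require Import ring lra.
Local Open Scope ring_scope.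


Delimit Scope Z_scope with coqZ.
Section RPart.
Variable R : realFieldType.

Definition zr (z : Z) : R := (int_of_Z z)%:~R.
Lemma zrD x y : zr (x + y)%coqZ = zr x + zr y.
Proof. by rewrite /zr -intrD; congr intr; lia. Qed.
Lemma zrM x y : zr (x * y)%coqZ = zr x * zr y.
Proof. by rewrite /zr -intrM; congr intr; lia. Qed.
Lemma zrB x y : zr (x - y)%coqZ = zr x - zr y.
Proof. by rewrite /zr -intrB; congr intr; lia. Qed.
Lemma zrN x : zr (- x)%coqZ = - zr x.
Proof. by rewrite /zr -mulrNz; congr intr; lia. Qed.
Lemma zr_pos p : zr (Zpos p) = (Pos.to_nat p)%:R.
Proof. by []. Qed.
Lemma zr_neg p : zr (Zneg p) = - (Pos.to_nat p)%:R.
Proof. have -> : Zneg p = (- Zpos p)%coqZ by []. by rewrite zrN zr_pos. Qed.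
Lemma zr0 : zr 0%coqZ = 0. Proof. by []. Qed.

Lemma mkv_m2 (a b x y z u : R) : mkv a b *m m2 x y z u = mkv (a*x+b*z) (a*y+b*u).
Proof.
apply/matrixP => i j; rewrite !mxE !big_ord_recl !big_ord0 !mxE.
by case: i => [[|[|i]] Hi]; case: j => [[|[|j]] Hj] //=; rewrite ?addr0.
Qed.
Lemma m2_m2 (a b c d x y z u : R) : m2 a b c d *m m2 x y z u =
  m2 (a*x+b*z) (a*y+b*u) (c*x+d*z) (c*y+d*u).
Proof.
apply/matrixP => i j; rewrite !mxE !big_ord_recl !big_ord0 !mxE.
by case: i => [[|[|i]] Hi]; case: j => [[|[|j]] Hj] //=; rewrite ?addr0.
Qed.
Lemma mkvD (a b c d : R) : mkv a b + mkv c d = mkv (a+c) (b+d).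
Proof.
apply/matrixP => i j; rewrite !mxE.
by case: i => [[|[|i]] Hi]; case: j => [[|[|j]] Hj] //=; rewrite ?addr0.
Qed.
Lemma scale_mkv (k a b : R) : k *: mkv a b = mkv (k*a) (k*b).
Proof.
apply/matrixP => i j; rewrite !mxE.
by case: i => [[|[|i]] Hi]; case: j => [[|[|j]] Hj].
Qed.
Lemma ip_m2 (a b c d x y z u : R) :
  (mkv a b *m m2 x y z u *m (mkv c d)^T) 0 0 = (a*x+b*z)*c + (a*y+b*u)*d.
Proof. by rewrite mkv_m2 !mxE !big_ord_recl !big_ord0 !mxE /= addr0. Qed.
Lemma refl_m2 (a b x y z u s : R) :
  1%:M - (m2 x y z u *m (mkv a b)^T) *m (s *: mkv a b) =
  m2 (1 - (x*a+y*b)*(s*a)) (- ((x*a+y*b)*(s*b))) (- ((z*a+u*b)*(s*a))) (1 - (z*a+u*b)*(s*b)).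
Proof.
rewrite scale_mkv.
apply/matrixP => i j; rewrite !mxE !big_ord_recl !big_ord0 !mxE.
case: i => [[|[|i]] Hi]; case: j => [[|[|j]] Hj] //=;
rewrite ?mxE /= ?big_ord_recl ?big_ord0 ?mxE /= ?addr0 ?add0r ?sub0r //.
Qed.

Definition dd (t : rtype) : R := if t is G2 then 3 else 1.
Definition emb (t : rtype) (f : zaff) : aff :=
  (m2 (zr f.1.1.1.1) (zr f.1.1.1.2) (zr f.1.1.2) (zr f.1.2),
   mkv (zr f.2.1 / dd t) (zr f.2.2 / dd t)).

Lemma emb_comp t f g : emb t (zcomp f g) = Defs.comp (emb t f) (emb t g).
Proof.
destruct f as [[[[a b] c] d] [x y]]; destruct g as [[[[a' b'] c'] d'] [x' y']].
rewrite /emb /Defs.comp /= m2_m2 mkv_m2 mkvD /zcomp /=.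
by rewrite !zrD !zrM; congr (m2 _ _ _ _, mkv _ _); ring.
Qed.
Lemma emb_id t : emb t zid = aff_id.
Proof.
rewrite /emb /aff_id /= !zr0 mul0r.
congr (_, _); apply/matrixP => i j; rewrite !mxE;
by case: i => [[|[|i]] Hi]; case: j => [[|[|j]] Hj].
Qed.

Lemma gen_emb t (j : 'I_3) : gen t j = emb t (zgen t j).
Proof.
rewrite /gen /refl /highest /ip /alpha1 /alpha2 /emb.
case: t; case: j => [[|[|[|j]]] Hj] //=;
rewrite ip_m2 refl_m2 scale_mkv ?zr_pos ?zr_neg ?zr0 /=.
all: rewrite ?scale_mkv; cbv [Pos.to_nat Pos.iter_op Nat.add]; congr (m2 _ _ _ _, mkv _ _); field. all: done.
Qed.

Lemma evalw_emb t s : evalw t s = emb t (zevalw t s).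
Proof.
elim: s => [|j s IH] /=; first by rewrite emb_id.
by rewrite emb_comp -IH -gen_emb.
Qed.
Lemma aff_pow_emb t f n : aff_pow (emb t f) n = emb t (zpow f n).
Proof.
elim: n => [|n IH] /=; first by rewrite emb_id.
by rewrite emb_comp -IH.
Qed.
Lemma zr_inj x y : zr x = zr y -> x = y.
Proof. by move/intr_inj/(can_inj int_of_ZK). Qed.
Lemma emb_injB f g : emb B2 f = emb B2 g -> f = g.
Proof.
destruct f as [[[[a b] c] d] [x y]]; destruct g as [[[[a' b'] c'] d'] [x' y']].
rewrite /emb /= !divr1 => -[H1 H2].
have E := fun i j => congr1 (fun A : 'M[R]_2 => A i j) H1.
have F := fun j => congr1 (fun A : 'rV[R]_2 => A 0 j) H2.
have := E 0 0; have := E 0 1; have := E 1 0; have := E 1 1;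
have := F 0; have := F 1. rewrite !mxE /=.
by move=> /zr_inj-> /zr_inj-> /zr_inj-> /zr_inj-> /zr_inj-> /zr_inj->.
Qed.
Lemma coxlen_le t s (u : seq 'I_3) : @evalw R t u = evalw t s -> (@coxlen R t s <= size u)%N.
Proof.
move=> Heq; rewrite /coxlen; case: ex_minnP => m _ Hmin; apply: Hmin.
by apply/existsP; exists (in_tuple u); rewrite /= Heq.
Qed.
Lemma coxlen_wit t s : exists u : seq 'I_3, @evalw R t u = evalw t s /\ size u = @coxlen R t s.
Proof.
rewrite /coxlen; case: ex_minnP => m /existsP [u /eqP Hu] _.
by exists u; rewrite size_tuple.
Qed.
Lemma lenN s : Z.of_nat (@coxlen R B2 s) = NB (zevalw B2 s).
Proof.
apply: Z.le_antisymm.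
- have [u [Hu1 Hu2]] := exists_word _ s (leqnn _).
  have := @coxlen_le B2 s u; rewrite !evalw_emb Hu1 => /(_ erefl). lia.
- have [u [Hu1 Hu2]] := coxlen_wit B2 s.
  move: Hu1; rewrite !evalw_emb => /emb_injB Hu1.
  have := N_le_size u; rewrite Hu1 Hu2; lia.
Qed.

Definition p0 : 'rV[R]_2 := mkv (4/5) (1/2).
Lemma p0_A0 : in_A0 B2 p0.
Proof.
move=> be; rewrite /pos_roots !inE => /or4P [] /eqP ->;
rewrite /ip /gram /p0 ip_m2; apply/andP; split; lra.
Qed.

Lemma oppmkv (a b : R) : - mkv a b = mkv (-a) (-b).
Proof.
apply/matrixP => i j; rewrite !mxE.
by case: i => [[|[|i]] Hi]; case: j => [[|[|j]] Hj].
Qed.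

Lemma root_Z alpha : alpha \in root_sys B2 ->
  exists a, In a rootsB /\ alpha = mkv (zr a.1) (zr a.2).
Proof.
rewrite /root_sys /pos_roots /= !inE.
case/orP => [/eqP->|]; first by exists (1,0)%coqZ; split; [simpl; tauto|rewrite zr_pos zr0].
case/orP => [/eqP->|]; first by exists (0,1)%coqZ; split; [simpl; tauto|rewrite zr_pos zr0].
case/orP => [/eqP->|]; first by exists (1,1)%coqZ; split; [simpl; tauto|rewrite zr_pos].
case/orP => [/eqP->|]; first by exists (2,1)%coqZ; split; [simpl; tauto|rewrite !zr_pos].
case/orP => [/eqP->|]; first by exists (-1,0)%coqZ; split; [simpl; tauto|rewrite oppmkv zr_neg zr0 oppr0].
case/orP => [/eqP->|]; first by exists (0,-1)%coqZ; split; [simpl; tauto|rewrite oppmkv zr_neg zr0 oppr0].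
case/orP => [/eqP->|]; first by exists (-1,-1)%coqZ; split; [simpl; tauto|rewrite oppmkv zr_neg].
move/eqP->; by exists (-2,-1)%coqZ; split; [simpl; tauto|rewrite oppmkv !zr_neg].
Qed.
Ltac zrsimp := rewrite ?zrD ?zrM ?zrB ?zrN ?zr_pos ?zr_neg ?zr0;
  cbv [Pos.to_nat Pos.iter_op Nat.add].

Lemma ip_p0 a : ip B2 p0 (mkv (zr a.1) (zr a.2)) = zr (zipB qB a) / 10.
Proof.
case: a => a1 a2; rewrite /ip /gram /p0 ip_m2; cbv beta iota delta [zipB qB fst snd].
zrsimp. by field.
Qed.

Lemma ip_wp0 f a : ip B2 (aff_app (emb B2 f) p0) (mkv (zr a.1) (zr a.2)) =
  zr (zipB (vmZ qB f.1) a + 10 * zipB f.2 a)%coqZ / 10.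
Proof.
destruct f as [[[[m1 m2'] m3] m4] [x y]]; case: a => a1 a2.
rewrite /aff_app /emb; cbv beta iota delta [fst snd]; rewrite mkv_m2 mkvD !divr1 /ip /gram /p0 ip_m2; cbv beta iota delta [zipB qB vmZ fst snd].
zrsimp. by field.
Qed.

Lemma strip_Z (c : int) E : c%:~R < zr E / 10 < c%:~R + 1 ->
  (10 * Z_of_int c < E < 10 * Z_of_int c + 10)%coqZ.
Proof.
case/andP; rewrite ltr_pdivlMr ?ltr_pdivrMr ?ltr0n // => h1 h2.
have e1 : (c%:~R * 10 : R) = (c * 10)%:~R by rewrite intrM.
have e2 : ((c%:~R + 1) * 10 : R) = ((c + 1) * 10)%:~R by rewrite intrM intrD.
rewrite e1 /zr ltr_int in h1; rewrite e2 /zr ltr_int in h2.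
lia.
Qed.
End RPart.

Lemma main_B2 (R : realFieldType) (w : seq 'I_3) (alpha : 'rV[R]_2) (c : int) :
  alpha \in root_sys B2 ->
  (forall v, in_A0 B2 v -> c%:~R < ip B2 v alpha < c%:~R + 1) ->
  (forall v, in_A0 B2 v ->
     c%:~R < ip B2 (aff_app (evalw B2 w) v) alpha < c%:~R + 1) ->
  (@coxlen R B2 (rcons w ord0) < @coxlen R B2 w)%N ->
  (@coxlen R B2 (rcons w (@Ordinal 3 1 isT)) < @coxlen R B2 w)%N -> False.
Proof.
move=> Ha H3 H4 L0 L1.
have [a [Ha1 Ea]] := @root_Z R _ Ha; subst alpha.
move: (H3 _ (p0_A0 R)); rewrite ip_p0 => /(@strip_Z R _ _) S1.
move: (H4 _ (p0_A0 R)); rewrite evalw_emb ip_wp0 => /(@strip_Z R _ _) S2.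
have [W1 [k W2]] := inW_all w.
have N0 := lenN R (rcons w ord0); have N1 := lenN R (rcons w (@Ordinal 3 1 isT)); have N := lenN R w.
rewrite !zevalw_rcons in N0 N1.
change (zgen B2 (nat_of_ord ord0)) with (zgenB 0) in N0.
change (zgen B2 (nat_of_ord (@Ordinal 3 1 isT))) with (zgenB 1) in N1.
apply: (final' _ _ (Z_of_int c) a W1 W2 Ha1). all: first [exact S1 | exact S2 | lia].
Qed.

Theorem lemma4p42 (R : realFieldType) (t : rtype) (w : seq 'I_3) (i : 'I_3)
    (alpha : 'rV[R]_2) (c : int) :
  i != ord0 ->
  alpha \in root_sys t ->
  (forall v, in_A0 t v -> c%:~R < ip t v alpha < c%:~R + 1) ->
  (forall v, in_A0 t v ->
     c%:~R < ip t (aff_app (evalw t w) v) alpha < c%:~R + 1) ->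
  @DR R t w = [set ord0; i] ->
  ~ has_order (@evalw R t [:: ord0; i]) 4.
Proof.
move=> Hi Ha H3 H4 HDR.
have H0 : ord0 \in @DR R t w by rewrite HDR !inE eqxx.
have H1 : i \in @DR R t w by rewrite HDR !inE eqxx orbT.
rewrite !inE in H0 H1; clear HDR.
rewrite evalw_emb => -[_ [_ Hm]].
case: t Ha H3 H4 H0 H1 Hm; case: i Hi => [[|[|[|i]]] Hi] //= _ Ha H3 H4 H0 H1 Hm.
- apply: (Hm 3) => //; rewrite aff_pow_emb -(emb_id R A2); congr emb; by vm_compute.
- apply: (Hm 3) => //; rewrite aff_pow_emb -(emb_id R A2); congr emb; by vm_compute.
- apply: (@main_B2 R w _ c Ha H3 H4 H0); move: H1; congr (_ < _)%N; congr coxlen; congr rcons; exact: val_inj.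
- apply: (Hm 2) => //; rewrite aff_pow_emb -(emb_id R B2); congr emb; by vm_compute.
- apply: (Hm 2) => //; rewrite aff_pow_emb -(emb_id R G2); congr emb; by vm_compute.
- apply: (Hm 3) => //; rewrite aff_pow_emb -(emb_id R G2); congr emb; by vm_compute.
Qed.
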